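(* Let $m \geq 0$, $n \geq 1$ be integers. For every $w = w_1 \cdots w_{m+n-1} \in \mathrm{Motz}_{m,n-1}$, the configuration $c(w)$ is a sorted deterministically recurrent configuration on $K_{m,n}^0$, and $\Xi(\Phi(c(w))) = w$. Consequently, $w \mapsto c(w)$ is the bijection $\Phi^{-1} \circ \Xi^{-1}$ from $\mathrm{Motz}_{m,n-1}$ to the set of sorted deterministically recurrent configurations on $K_{m,n}^0$.
   Context: $K_{m,n}^0$ is the complete bipartite graph with ''top'' vertices $v^t_0, \ldots, v^t_m$ and ''bottom'' vertices $v^b_1, \ldots, v^b_n$, with an edge between every top and every bottom vertex; $v^t_0$ is the sink. A configuration is a vector $c = (c^t_1, \ldots, c^t_m; c^b_1, \ldots, c^b_n)$ of non-negative integers; it is sorted if $c^t$, $c^b$ are weakly increasing, stable if $c^t_i < n$ and $c^b_j < m+1$ for all $i,j$. Abelian sandpile model (ASM): an unstable non-sink vertex topples by sending one grain to each neighbour (bottom vertices also to the sink); grains sent to the sink disappear. In the Markov chain on stable configurations which adds a grain to a uniformly random non-sink vertex and stabilises by the ASM, a stable configuration is deterministically recurrent if it is a recurrent state. Labelled Motzkin paths: words in steps $U=(1,1)$, $D=(1,-1)$ and horizontal steps $H^N, H^E$ (both $=(1,0)$), starting and ending at height $0$ and never going below the $x$-axis. $\mathrm{Motz}_{m,n-1}$ is the set of such paths with $m+n-1$ steps, exactly $m$ of which are $U$ or $H^E$ (equivalently exactly $n-1$ are $D$ or $H^N$). For $w \in \mathrm{Motz}_{m,n-1}$, $c(w) =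 (c^t; c^b)$ is defined by: for $i \in \{1,\ldots,m\}$, if $w_j$ is the $i$-th step of $w$ belonging to $\{D, H^E\}$, then $c^t_i := |\{ j' < j : w_{j'} \in \{U, H^N\}\}|$; for $j \in \{1,\ldots,n-1\}$, if $w_i$ is the $j$-th step of $w$ belonging to $\{D, H^N\}$, then $c^b_j := |\{ i' < i : w_{i'} \in \{U, H^E\}\}|$; and $c^b_n := m$. A parallelogram polyomino in the box $[0,m+1]\times[0,n]$ is the set of unit cells between two lattice paths $\mathcal{U}$ (upper) and $\mathcal{L}$ (lower) from $(0,0)$ to $(m+1,n)$ with steps $N=(0,1)$, $E=(1,0)$, meeting only at their endpoints; necessarily $\mathcal{U} = (N, u_1, \ldots, u_{m+n-1}, E)$ and $\mathcal{L} = (E, \ell_1, \ldots, \ell_{m+n-1}, N)$. The map $\Xi$ sends such a polyomino to $w_1 \cdots w_{m+n-1}$ with $w_i = U$ if $(u_i,\ell_i) = (N,E)$, $w_i = H^N$ if $(u_i,\ell_i)=(N,N)$, $w_i = H^E$ if $(u_i,\ell_i) = (E,E)$, $w_i = D$ if $(u_i,\ell_i) = (E,N)$; it is known to be a bijection onto $\mathrm{Motz}_{m,n-1}$. The Dukes–Le Borgne map $\Phi$: for a sorted stable $c$, $\mathcal{U}(c^t)$ is the path from $(0,0)$ to $(m+1,n)$ whose $E$ steps occur at heights $1+c^t_1, \ldots, 1+c^t_m, n$, and $\mathcal{L}(c^b)$ the path from $(0,0)$ to $(m+1,n)$ whose $N$ steps occur at $x$-coordinates $1+c^b_1, \ldots,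 1+c^b_n$; $\Phi(c)$ is the polyomino between them. It is known that $\Phi$ is a bijection from sorted deterministically recurrent configurations on $K_{m,n}^0$ to parallelogram polyominoes in $[0,m+1]\times[0,n]$. *)

(* Defs.v *)
From mathcomp Require Import all_boot.
Set Implicit Arguments.
Unset Strict Implicit.
Unset Printing Implicit Defensive.

Inductive rtc (T : Type) (R : T -> T -> Prop) : T -> T -> Prop :=
| rtc_refl x : rtc R x x
| rtc_step x y z : R x y -> rtc R y z -> rtc R x z.

(** * Configurations on K_{m,n}^0
    A configuration is a pair (ct, cb) with ct = [c^t_1; ...; c^t_m]
    and cb = [c^b_1; ...; c^b_n] (0-indexed lists). *)
Definition config := (seq nat * seq nat)%type.

Definition stable (m n : nat) (c : config) : Prop :=
  [/\ size c.1 = m, size c.2 = n,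
      all (fun x => x < n) c.1 & all (fun x => x < m.+1) c.2].

Definition sorted_config (c : config) : Prop :=
  sorted leq c.1 /\ sorted leq c.2.

(** Top vertex v^t_{i+1} (degree n) sends one grain to every bottom vertex;
    bottom vertex v^b_{j+1} (degree m+1) sends one grain to every top vertex,
    the grain sent to the sink v^t_0 disappearing. *)
Definition topple_step (m n : nat) (c c' : config) : Prop :=
  (exists2 i, i < m &
     n <= nth 0 c.1 i /\ c' = (set_nth 0 c.1 i (nth 0 c.1 i - n), map S c.2))
  \/
  (exists2 j, j < n &
     m.+1 <= nth 0 c.2 j /\ c' = (map S c.1, set_nth 0 c.2 j (nth 0 c.2 j - m.+1))).

Definition stabilises (m n : nat) (c c' : config) : Prop :=
  rtc (topple_step m n) c c' /\ stable m n c'.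

Definition add_top (i : nat) (c : config) : config :=
  (set_nth 0 c.1 i (nth 0 c.1 i).+1, c.2).
Definition add_bot (j : nat) (c : config) : config :=
  (c.1, set_nth 0 c.2 j (nth 0 c.2 j).+1).

(** Positive-probability transitions of the Markov chain on stable
    configurations: add a grain to some non-sink vertex and stabilise. *)
Definition chain_step (m n : nat) (c c' : config) : Prop :=
  stable m n c /\
  ((exists2 i, i < m & stabilises m n (add_top i c) c') \/
   (exists2 j, j < n & stabilises m n (add_bot j c) c')).

(** Recurrent state of the (finite) Markov chain:
    every state reachable from c can reach c back. *)
Definition recurrent (m n : nat) (c : config) : Prop :=
  stable m n c /\
  forall c', rtc (chain_step m n) c c' -> rtc (chain_step m n) c' c.

Inductive stp := U | D | HN | HE.

Definition isU (s : stp) := if s is U then true else false.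
Definition isD (s : stp) := if s is D then true else false.
Definition isUHN (s : stp) := match s with U | HN => true | _ => false end.
Definition isUHE (s : stp) := match s with U | HE => true | _ => false end.
Definition isDHN (s : stp) := match s with D | HN => true | _ => false end.
Definition isDHE (s : stp) := match s with D | HE => true | _ => false end.

Definition motz (m k : nat) (w : seq stp) : Prop :=
  [/\ size w = m + k, count isUHE w = m,
      count isU w = count isD w &
      forall j, count isD (take j w) <= count isU (take j w)].

Definition stat_list (P Q : pred stp) (w : seq stp) : seq nat :=
  [seq count Q (take j w) | j <- iota 0 (size w) & P (nth U w j)].

Definition cfg_of (m : nat) (w : seq stp) : config :=
  (stat_list isDHE isUHN w, rcons (stat_list isDHN isUHE w) m).

Inductive dir := dN | dE.
Definition isN (d : dir) := if d is dN then true else false.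
Definition isE (d : dir) := if d is dE then true else false.

Definition lattice_path (m n : nat) (s : seq dir) : Prop :=
  size s = m.+1 + n /\ count isE s = m.+1.

Definition pt (s : seq dir) (k : nat) : nat * nat :=
  (count isE (take k s), count isN (take k s)).

(** A parallelogram polyomino in [0,m+1]x[0,n], given by its pair
    (upper path, lower path). *)
Definition parallelogram (m n : nat) (p : seq dir * seq dir) : Prop :=
  [/\ lattice_path m n p.1, lattice_path m n p.2,
      (forall k, count isN (take k p.2) <= count isN (take k p.1)) &
      (forall k1 k2, 0 < k1 < size p.1 -> 0 < k2 < size p.2 ->
         pt p.1 k1 <> pt p.2 k2)].

Fixpoint steps_gen (a b : dir) (prev : nat) (hs : seq nat) (top : nat)
  : seq dir :=
  match hs with
  | [::] => nseq (top - prev) a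
  | h :: hs' => nseq (h - prev) a ++ b :: steps_gen a b h hs' top
  end.

Definition Upath (n : nat) (ct : seq nat) : seq dir :=
  steps_gen dN dE 0 (rcons (map S ct) n) n.
Definition Lpath (m : nat) (cb : seq nat) : seq dir :=
  steps_gen dE dN 0 (map S cb) m.+1.

Definition Phi (m n : nat) (c : config) : seq dir * seq dir :=
  (Upath n c.1, Lpath m c.2).

Definition stp_of (ul : dir * dir) : stp :=
  match ul with
  | (dN, dE) => U
  | (dN, dN) => HN
  | (dE, dE) => HE
  | (dE, dN) => D
  end.

Definition inner (s : seq dir) : seq dir := take (size s).-2 (behead s).

Definition Xi (p : seq dir * seq dir) : seq stp :=
  [seq stp_of ul | ul <- zip (inner p.1) (inner p.2)].

(* Main.v *)
Require Import Defs.
From mathcomp Require Import all_boot.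
From mathcomp Require Import zify.
Set Implicit Arguments. Unset Strict Implicit. Unset Printing Implicit Defensive.

Fixpoint hts (pa : pred dir) (p : nat) (s : seq dir) : seq nat :=
  if s is x :: s' then (if pa x then hts pa p.+1 s' else p :: hts pa p s') else [::].

Lemma hts_ge pa s p : all (fun h => p <= h) (hts pa p s).
Proof.
elim: s p => //= x s IH p; case: (pa x) => /=.
- by apply: sub_all (IH p.+1) => h /=; lia.
- by rewrite leqnn IH.
Qed.

Lemma hts_le pa s p : all (fun h => h <= p + count pa s) (hts pa p s).
Proof.
elim: s p => //= x s IH p; case: (pa x) => /=.
- by apply: sub_all (IH p.+1) => h /=; lia.
- rewrite leq_addr /=; by apply: sub_all (IH p) => h /=; lia.
Qed.

Lemma path_leS p l : path leq p.+1 l -> path leq p l.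
Proof. by case: l => //= h l /andP[H1 ->]; rewrite andbT; lia. Qed.

Lemma hts_path pa s p : path leq p (hts pa p s).
Proof.
elim: s p => //= x s IH p; case: (pa x) => /=.
- exact: path_leS.
- by rewrite leqnn IH.
Qed.

Lemma size_hts pa s p : size (hts pa p s) = count (predC pa) s.
Proof. by elim: s p => //= x s IH p; case: (pa x) => /=; rewrite IH. Qed.

Lemma map_S_hts pa s p : map S (hts pa p s) = hts pa p.+1 s.
Proof. by elim: s p => //= x s IH p; case: (pa x) => /=; rewrite IH. Qed.

Lemma hts_cat pa s1 s2 p : hts pa p (s1 ++ s2) = hts pa p s1 ++ hts pa (p + count pa s1) s2.
Proof.
elim: s1 p => /= [|x s1 IH] p; first by rewrite addn0.
case: (pa x) => /=; rewrite IH //. by rewrite addnS.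
Qed.

Lemma hts_rcons pa s x p : hts pa p (rcons s x) =
  if pa x then hts pa p s else rcons (hts pa p s) (p + count pa s).
Proof. by rewrite -cats1 hts_cat /=; case: (pa x); rewrite ?cats0 ?cats1. Qed.

Lemma all0_count (l : seq nat) p a : all (fun h => p <= h) l -> a <= p ->
  count (fun h => h < a) l = 0.
Proof.
move=> Hl Ha; apply/eqP; rewrite -leqn0 leqNgt -has_count; apply/hasP => -[h Hh] /=.
by move/allP: Hl => /(_ h Hh); lia.
Qed.

Lemma hts_nth_take pa s p k i : i < count (predC pa) (take k s) ->
  nth 0 (hts pa p s) i <= p + count pa (take k s).
Proof.
move=> Hi; rewrite -{1}(cat_take_drop k s) hts_cat nth_cat size_hts Hi.
by move: (hts_le pa (take k s) p) => /(all_nthP 0)/(_ i); rewrite size_hts; apply.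
Qed.

Lemma lemY pa s p beta : p < beta -> exists k,
  count pa (take k s) + p < beta /\
  count (fun h => h < beta) (hts pa p s) = count (predC pa) (take k s).
Proof.
elim: s p => [|x s IH] p Hp /=.
  by exists 0.
case Hx: (pa x).
- case: (ltnP p.+1 beta) => Hb.
  + have [k [H1 H2]] := IH _ Hb; exists k.+1 => /=; rewrite Hx /= H2; split => //; lia.
  + exists 0 => /=; split => //; exact: (all0_count (hts_ge pa s p.+1)).
- have [k [H1 H2]] := IH _ Hp; exists k.+1 => /=; rewrite Hx /= H2 Hp; split => //; lia.
Qed.

Lemma lemZ pa s p k a : a <= p + count pa (take k s) ->
  count (fun h => h < a) (hts pa p s) <= count (predC pa) (take k s).
Proof.
elim: s p k => [|x s IH] p k Ha /=; first by [].
case: k Ha => [|k] /= Ha.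
  rewrite (@all0_count _ p) //; last by lia.
  by case: (pa x) => /=; [apply: sub_all (hts_ge pa s p.+1) => h /=; lia | rewrite leqnn hts_ge].
case Hx: (pa x) Ha => /= Ha.
- apply: IH; lia.
- have := IH p k; lia.
Qed.

Lemma steps_shift a b p hs top : all (fun h => p < h) hs -> p < top ->
  steps_gen a b p hs top = a :: steps_gen a b p.+1 hs top.
Proof.
case: hs => [|h hs] /= H1 H2.
  by have -> : top - p = (top - p.+1).+1 by lia.
by move/andP: H1 => [H1 _]; have -> : h - p = (h - p.+1).+1 by lia.
Qed.

Lemma decode (pa : pred dir) (a b : dir) (Ha : forall x, pa x -> x = a) (Hb : forall x, ~~ pa x -> x = b) s p :
  steps_gen a b p (hts pa p s) (p + count pa s) = s.
Proof.
elim: s p => [|x s IH] p /=; first by rewrite addn0 subnn.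
case Hx: (pa x) => /=.
- rewrite (Ha _ Hx) steps_shift.
  + by rewrite -addSnnS IH.
  + exact: hts_ge.
  + lia.
- by rewrite subnn /= add0n IH (Hb x) // Hx.
Qed.

Lemma hts_nseq (pa : pred dir) (a : dir) (Ha : pa a) k r p : hts pa p (nseq k a ++ r) = hts pa (p + k) r.
Proof. by elim: k p => [|k IH] p /=; [rewrite addn0 | rewrite Ha IH addSnnS]. Qed.

Lemma count_nseq_pa (pa : pred dir) (a : dir) (Ha : pa a) k : count pa (nseq k a) = k.
Proof. by elim: k => //= k ->; rewrite Ha. Qed.

Lemma encode (pa : pred dir) (a b : dir) (Ha : pa a) (Hb : ~~ pa b) hs p top :
  path leq p hs -> all (fun h => h <= top) hs -> p <= top ->
  [/\ hts pa p (steps_gen a b p hs top) = hs,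
      count pa (steps_gen a b p hs top) = top - p &
      size (steps_gen a b p hs top) = size hs + (top - p)].
Proof.
elim: hs p => [|h hs IH] p /=.
  move=> _ _ _; rewrite -(cats0 (nseq _ a)) hts_nseq // cats0 count_nseq_pa //.
  by rewrite size_nseq.
move=> /andP[H1 H2] /andP[H3 H4] H5.
have [E1 E2 E3] := IH h H2 H4 H3.
rewrite hts_nseq // /= (negbTE Hb) count_cat count_nseq_pa //= (negbTE Hb) size_cat size_nseq /=.
have -> : p + (h - p) = h by lia.
rewrite E1 E2 E3; split => //; lia.
Qed.

Definition upper (x : stp) : dir := match x with U | HN => dN | _ => dE end.
Definition lower (x : stp) : dir := match x with U | HE => dE | _ => dN end.

Lemma stat_hts (P Q : pred stp) (f : stp -> dir) (pa : pred dir) :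
  (forall x, P x = ~~ pa (f x)) -> (forall x, Q x = pa (f x)) ->
  forall w, stat_list P Q w = hts pa 0 (map f w).
Proof.
move=> HP HQ w.
suff H : forall p, [seq p + count Q (take j w) | j <- iota 0 (size w) & P (nth U w j)]
    = hts pa p (map f w).
  by rewrite -H /stat_list; apply: eq_map => j.
elim: w => [|x w IH] p //=.
rewrite -[1]/(1 + 0) iotaDl filter_map /=.
rewrite (@eq_filter _ _ (fun j => P (nth U w j))) //.
case Hx: (pa (f x)).
- rewrite HP Hx /= -map_comp -IH; apply: eq_map => j /=; rewrite HQ Hx /= add0n; lia.
- rewrite HP Hx /= addn0 -map_comp -IH; congr cons; apply: eq_map => j /=; rewrite HQ Hx /=; by have -> : 0 + j = j by [].
Qed.

Lemma ct_hts w : stat_list isDHE isUHN w = hts isN 0 (map upper w).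
Proof. by apply: stat_hts => -[]. Qed.
Lemma cb_hts w : stat_list isDHN isUHE w = hts isE 0 (map lower w).
Proof. by apply: stat_hts => -[]. Qed.

Lemma cnt_upperN w : count isN (map upper w) = count isUHN w.
Proof. by rewrite count_map; apply: eq_count => -[]. Qed.
Lemma cnt_upperE w : count isE (map upper w) = count isDHE w.
Proof. by rewrite count_map; apply: eq_count => -[]. Qed.
Lemma cnt_lowerN w : count isN (map lower w) = count isDHN w.
Proof. by rewrite count_map; apply: eq_count => -[]. Qed.
Lemma cnt_lowerE w : count isE (map lower w) = count isUHE w.
Proof. by rewrite count_map; apply: eq_count => -[]. Qed.
Lemma cnt_predCN s : count (predC isN) s = count isE s.
Proof. by apply: eq_count => -[]. Qed.
Lemma cnt_predCE s : count (predC isE) s = count isN s.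
Proof. by apply: eq_count => -[]. Qed.
Lemma cnt_NE s : count isN s + count isE s = size s.
Proof. by elim: s => //= -[] s IH /=; lia. Qed.

Lemma id1 w : count isUHN w + count isD w = count isDHN w + count isU w.
Proof. by elim: w => //= -[] w IH /=; lia. Qed.
Lemma id2 w : count isDHE w + count isU w = count isUHE w + count isD w.
Proof. by elim: w => //= -[] w IH /=; lia. Qed.
Lemma id3 w : count isUHN w + count isDHE w = size w.
Proof. by elim: w => //= -[] w IH /=; lia. Qed.
Lemma id4 w : count isUHE w + count isDHN w = size w.
Proof. by elim: w => //= -[] w IH /=; lia. Qed.

Lemma motz_counts m n w : 1 <= n -> motz m (n - 1) w ->
  [/\ count isUHN w = n - 1, count isDHE w = m, count isDHN w = n - 1
    & count isUHE w = m].
Proof.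
move=> Hn [H1 H2 H3 H4].
have := id1 w; have := id2 w; have := id3 w; have := id4 w; move=> *; split; lia.
Qed.

Lemma Upath_w n w : 1 <= n -> count isUHN w = n - 1 ->
  Upath n (hts isN 0 (map upper w)) = dN :: rcons (map upper w) dE.
Proof.
move=> Hn Hc; rewrite /Upath map_S_hts.
set P := dN :: rcons (map upper w) dE.
have E1 : hts isN 0 P = rcons (hts isN 1 (map upper w)) n.
  by rewrite /P /= hts_rcons /= cnt_upperN Hc; congr rcons; lia.
have E2 : count isN P = n by rewrite /P /= -cats1 count_cat cnt_upperN Hc /=; lia.
rewrite -E1 -E2 -[count isN P]add0n; apply: decode => -[] //.
Qed.

Lemma Lpath_w m w : count isUHE w = m ->
  Lpath m (rcons (hts isE 0 (map lower w)) m) = dE :: rcons (map lower w) dN.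
Proof.
move=> Hc; rewrite /Lpath map_rcons map_S_hts.
set P := dE :: rcons (map lower w) dN.
have E1 : hts isE 0 P = rcons (hts isE 1 (map lower w)) m.+1.
  by rewrite /P /= hts_rcons /= cnt_lowerE Hc.
have E2 : count isE P = m.+1 by rewrite /P /= -cats1 count_cat cnt_lowerE Hc /=; lia.
rewrite -E1 -E2 -[count isE P]add0n; apply: decode => -[] //.
Qed.

Lemma Phi_w m n w : 1 <= n -> motz m (n - 1) w ->
  Phi m n (cfg_of m w) = (dN :: rcons (map upper w) dE, dE :: rcons (map lower w) dN).
Proof.
move=> Hn Hw; have [C1 C2 C3 C4] := motz_counts Hn Hw.
by rewrite /Phi /cfg_of /= ct_hts cb_hts Upath_w // Lpath_w.
Qed.

Lemma inner_w (s : seq dir) x y : inner (x :: rcons s y) = s.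
Proof. by rewrite /inner /= size_rcons -cats1 take_size_cat. Qed.

Lemma zip_ul w : [seq stp_of ul | ul <- zip (map upper w) (map lower w)] = w.
Proof. by elim: w => //= -[] w ->. Qed.

Lemma Xi_w m n w : 1 <= n -> motz m (n - 1) w -> Xi (Phi m n (cfg_of m w)) = w.
Proof. by move=> Hn Hw; rewrite Phi_w // /Xi /= !inner_w zip_ul. Qed.

Lemma take_rcons_le (T : Type) k (s : seq T) x : k <= size s -> take k (rcons s x) = take k s.
Proof. by move=> H; rewrite -cats1 takel_cat. Qed.

Lemma para_w m n w : 1 <= n -> motz m (n - 1) w -> parallelogram m n (Phi m n (cfg_of m w)).
Proof.
move=> Hn Hw; have [C1 C2 C3 C4] := motz_counts Hn Hw.
have Hw' := Hw; case: Hw' => [S1 S2 S3 S4].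
rewrite Phi_w //; split => /=.
- split; first by rewrite /= size_rcons size_map; lia.
  by rewrite /= -cats1 count_cat cnt_upperE /=; lia.
- split; first by rewrite /= size_rcons size_map; lia.
  by rewrite /= -cats1 count_cat cnt_lowerE /=; lia.
- case=> [|k] //=.
  case: (leqP k (size w)) => Hk.
  + rewrite !take_rcons_le ?size_map // -!map_take cnt_upperN cnt_lowerN.
    have := S4 k; have := id1 (take k w); lia.
  + rewrite !take_oversize ?size_rcons ?size_map //.
    rewrite -!cats1 !count_cat cnt_upperN cnt_lowerN /=; lia.
- move=> [|k1] [|k2] //=; rewrite !size_rcons !size_map => Hk1 Hk2.
  rewrite /pt /= !take_rcons_le ?size_map; try lia.
  rewrite -!map_take cnt_upperN cnt_upperE cnt_lowerN cnt_lowerE => -[E1 E2].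
  have := id3 (take k1 w); have := id4 (take k2 w); rewrite !size_take.
  have -> : (if k1 < size w then k1 else size w) = k1 by case: ifP; lia.
  have -> : (if k2 < size w then k2 else size w) = k2 by case: ifP; lia.
  move=> F1 F2; have Ek : k1 = k2 by lia.
  subst k2; have := S4 k1; have := id2 (take k1 w); lia.
Qed.

Definition fsc (c : config) (At Ab : pred nat) : Prop :=
  [/\ has At (iota 0 (size c.1)) || has Ab (iota 0 (size c.2)),
      forall i, i < size c.1 -> At i -> nth 0 c.1 i < count Ab (iota 0 (size c.2)) &
      forall j, j < size c.2 -> Ab j -> nth 0 c.2 j < count At (iota 0 (size c.1))].

Definition fsc_free c := forall At Ab, ~ fsc c At Ab.

Lemma count_le_nth (s : seq nat) (A : pred nat) (p : pred nat) :
  (forall i, i < size s -> A i -> p (nth 0 s i)) -> count A (iota 0 (size s)) <= count p s.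
Proof.
move=> H; rewrite -{2}(mkseq_nth 0 s) /mkseq count_map.
have : forall i, i \in iota 0 (size s) -> A i -> p (nth 0 s i).
  by move=> i; rewrite mem_iota => /andP[_ Hi]; apply: H.
elim: (iota 0 (size s)) => //= x l IH H'.
have : count A l <= count (preim (nth 0 s) p) l.
  by apply: IH => i Hi; apply: H'; rewrite inE Hi orbT.
have := H' x (mem_head _ _); case: (A x) => /=; last by lia.
by move=> ->; lia.
Qed.

Lemma count_iota_lt a N : count (fun i => i < a) (iota 0 N) = minn a N.
Proof.
elim: N => [|N IH]; first by rewrite minn0.
rewrite -addn1 iotaD count_cat IH /= add0n addn0; case: ltnP => H; lia.
Qed.

Lemma fsc_free_cfg m n w : 1 <= n -> motz m (n - 1) w -> fsc_free (cfg_of m w).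
Proof.
move=> Hn Hw At Ab [Hne Ht Hb].
have [C1 C2 C3 C4] := motz_counts Hn Hw.
have Hw' := Hw; case: Hw' => [S1 S2 S3 S4].
move: Hne Ht Hb; rewrite /cfg_of /= ct_hts cb_hts size_rcons !size_hts cnt_predCN cnt_predCE
  cnt_upperE cnt_lowerN C2 C3.
have -> : (n - 1).+1 = n by lia.
set a := count At (iota 0 m); set beta := count Ab (iota 0 n).
set su := map upper w; set sl := map lower w.
move=> Hne Ht Hb.
have Ham : a <= m by rewrite /a -[m in _ <= m](size_iota 0 m) count_size.
have H1 : a <= count (fun h => h < beta) (hts isN 0 su).
  have := @count_le_nth (hts isN 0 su) At (fun h => h < beta).
  by rewrite size_hts cnt_predCN cnt_upperE C2; apply.
have H2 : beta <= count (fun h => h < a) (hts isE 0 sl).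
  have := @count_le_nth (rcons (hts isE 0 sl) m) Ab (fun h => h < a).
  rewrite size_rcons size_hts cnt_predCE cnt_lowerN C3.
  have -> : (n - 1).+1 = n by lia.
  move=> /(_ Hb); rewrite -cats1 count_cat /=; lia.
have Hbeta : 0 < beta.
  case: (posnP beta) => // Hb0; exfalso; move: Hne => /orP[] /hasP[i].
  - by rewrite mem_iota => /andP[_ Hi] /(Ht _ Hi); rewrite Hb0.
  - by move=> Hi HAb; move: Hb0; rewrite /beta; move/eqP; rewrite -leqn0 leqNgt -has_count;
      move/negP; apply; apply/hasP; exists i.
have [k [Hk1 Hk2]] := @lemY isN su 0 beta Hbeta.
have Hz := @lemZ isE sl 0 k a.
have Hdom : count isN (take k sl) <= count isN (take k su).
  rewrite /sl /su -!map_take cnt_upperN cnt_lowerN.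
  have := S4 k; have := id1 (take k w); lia.
have Hsz : size (take k sl) = size (take k su) by rewrite !size_take !size_map.
have := cnt_NE (take k sl); have := cnt_NE (take k su).
rewrite cnt_predCN in Hk2; rewrite cnt_predCE in Hz.
move=> F1 F2.
have : count (fun h => h < a) (hts isE 0 sl) <= count isN (take k sl) by apply: Hz; lia.
lia.
Qed.

Lemma path_le_last h s : path leq h s -> all (fun y => y <= last h s) (h :: s).
Proof.
elim: s h => [|y s IH] h /=; first by rewrite leqnn.
move=> /andP[H1 H2]; have := IH y H2; move=> /= /andP[H3 ->]; rewrite H3 andbT.
rewrite andbT; exact: leq_trans H1 H3.
Qed.

Lemma sorted_rcons_le (s : seq nat) x : sorted leq (rcons s x) -> all (fun y => y <= x) (rcons s x).
Proof.
case: s => [|h s] /=; first by rewrite leqnn.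
move=> H; have := path_le_last H; rewrite last_rcons //.
Qed.

Lemma sorted_rcons_sorted (s : seq nat) x : sorted leq (rcons s x) -> sorted leq s.
Proof. by case: s => //= h s; rewrite rcons_path => /andP[]. Qed.

Lemma sorted_path0 (s : seq nat) : sorted leq s -> path leq 0 s.
Proof. by case: s. Qed.

Lemma map_upper_zip s1 s2 : size s1 = size s2 -> map upper (map stp_of (zip s1 s2)) = s1.
Proof. by elim: s1 s2 => [|x s1 IH] [|y s2] //= [E]; rewrite IH //; case: x; case: y. Qed.
Lemma map_lower_zip s1 s2 : size s1 = size s2 -> map lower (map stp_of (zip s1 s2)) = s2.
Proof. by elim: s1 s2 => [|x s1 IH] [|y s2] //= [E]; rewrite IH //; case: x; case: y. Qed.

Lemma count_take_le (T : Type) (p : pred T) j s : count p (take j s) <= count p s.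
Proof. by rewrite -{2}(cat_take_drop j s) count_cat leq_addr. Qed.

Lemma construct m n c : 1 <= n -> sorted_config c -> stable m n c -> fsc_free c ->
  exists w, motz m (n - 1) w /\ cfg_of m w = c.
Proof.
move=> Hn; case: c => t b [/= Sot Sob] [/= Hst Hsb Hat Hab] Hfree.
case/lastP: b Sob Hsb Hab Hfree => [|b' x]; first by move=> _ /= Hsb; lia.
move=> Sob Hsb Hab Hfree.
rewrite size_rcons in Hsb.
have Hxm : x = m.
  move: Hab; rewrite all_rcons => /andP[Hx Hab].
  case: (ltnP x m) => Hx'; last by lia.
  exfalso; apply: (Hfree predT predT); split => /=.
  - rewrite size_rcons Hsb; case: (n) Hn => // n' _; by rewrite orbT.
  - move=> i Hi _; rewrite count_predT size_iota size_rcons Hsb.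
    by move: Hat => /(all_nthP 0)/(_ i Hi).
  - move=> j Hj _; rewrite count_predT size_iota Hst.
    by move: (sorted_rcons_le Sob) => /(all_nthP 0)/(_ j Hj) /=; lia.
subst x.
move: Hab; rewrite all_rcons => /andP[_ Hab].
have Sob' := sorted_rcons_sorted Sob.
set su := steps_gen dN dE 0 t (n - 1).
set sl := steps_gen dE dN 0 b' m.
have [Eu1 Eu2 Eu3] : [/\ hts isN 0 su = t, count isN su = n - 1 - 0 & size su = size t + (n - 1 - 0)].
  apply: encode => //; first exact: sorted_path0.
  by apply: (sub_all _ Hat) => h /=; lia.
have [El1 El2 El3] : [/\ hts isE 0 sl = b', count isE sl = m - 0 & size sl = size b' + (m - 0)].
  apply: encode => //; first exact: sorted_path0.
have Hsz : size su = size sl by rewrite Eu3 El3 Hst; lia.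
set w := map stp_of (zip su sl).
have Wu : map upper w = su by rewrite map_upper_zip.
have Wl : map lower w = sl by rewrite map_lower_zip.
have Cuhn : count isUHN w = n - 1 by rewrite -cnt_upperN Wu Eu2; lia.
have Cdhn : count isDHN w = n - 1.
  by rewrite -cnt_lowerN Wl; have := cnt_NE sl; rewrite El2 El3; lia.
have Cuhe : count isUHE w = m by rewrite -cnt_lowerE Wl El2; lia.
exists w; split; last first.
  by rewrite /cfg_of ct_hts cb_hts Wu Wl Eu1 El1.
split.
- by rewrite /w size_map size_zip Hsz El3; lia.
- exact: Cuhe.
- by have := id1 w; lia.
move=> j.
case: (leqP (count isD (take j w)) (count isU (take j w))) => // Hlt; exfalso.
set Eu := count isE (take j su); set Nu := count isN (take j su).
set El := count isE (take j sl); set Nl := count isN (take j sl).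
have HNu : Nu = count isUHN (take j w) by rewrite /Nu -Wu -map_take cnt_upperN.
have HNl : Nl = count isDHN (take j w) by rewrite /Nl -Wl -map_take cnt_lowerN.
have Hlt' : Nu < Nl by have := id1 (take j w); lia.
have HNl1 : Nl <= n - 1 by rewrite -Cdhn -cnt_lowerN Wl; apply: count_take_le.
have HEu1 : Eu <= m by have := count_take_le isE j su; have := cnt_NE su; rewrite Eu2 Eu3 Hst -/Eu; lia.
have Hsum : El + Nl = Eu + Nu.
  have := cnt_NE (take j su); have := cnt_NE (take j sl); rewrite !size_take Hsz; lia.
apply: (Hfree (fun i => i < Eu) (fun j' => j' < Nl)); split => /=.
- rewrite size_rcons Hsb; apply/orP; right; apply/hasP; exists 0; rewrite ?mem_iota; lia.
- move=> i Hi HiE; rewrite size_rcons Hsb count_iota_lt.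
  have -> : minn Nl n = Nl by lia.
  rewrite -Eu1; apply: (leq_ltn_trans (@hts_nth_take isN su 0 j i _)); last by lia.
  by rewrite cnt_predCN.
- move=> j' Hj' HjN; rewrite Hst count_iota_lt.
  have -> : minn Eu m = Eu by lia.
  rewrite size_rcons Hsb in Hj'.
  have Hjb : j' < size b' by lia.
  rewrite nth_rcons Hjb -El1.
  apply: (leq_ltn_trans (@hts_nth_take isE sl 0 j j' _)); last by lia.
  by rewrite cnt_predCE.
Qed.

Definition topT (n i : nat) (x : config) : config :=
  (set_nth 0 x.1 i (nth 0 x.1 i - n), map S x.2).
Definition topB (m j : nat) (x : config) : config :=
  (map S x.1, set_nth 0 x.2 j (nth 0 x.2 j - m.+1)).
Definition addb (x : config) : config := (x.1, map S x.2).
Definition shape (m n : nat) (x : config) := size x.1 = m /\ size x.2 = n.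

Lemma nthS (s : seq nat) k : nth 0 (map S s) k = if k < size s then (nth 0 s k).+1 else 0.
Proof. by case: ltnP => H; [rewrite (nth_map 0) | rewrite nth_default ?size_map]. Qed.
Lemma nthset (s : seq nat) i a k : nth 0 (set_nth 0 s i a) k = if k == i then a else nth 0 s k.
Proof. by rewrite nth_set_nth. Qed.
Lemma size_set (s : seq nat) i a : i < size s -> size (set_nth 0 s i a) = size s.
Proof. by move=> H; rewrite size_set_nth; lia. Qed.

Ltac seqeq := apply: (@eq_from_nth _ 0);
  [ rewrite ?(size_set_nth, size_map); lia
  | let k := fresh "k" in let Hk := fresh "Hk" in move=> k Hk;
    rewrite ?(size_set_nth, size_map) in Hk;
    rewrite ?(nthS, nthset, size_set_nth, size_map);
    repeat (let H := fresh "H" in case: ifP => H; try (move/eqP: H => H; subst)); lia ].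

Ltac cfgeq := rewrite /topT /topB /addb /add_top /add_bot /=; f_equal; seqeq.


Lemma cTT n x (i i' : nat) : i != i' -> i < size x.1 -> i' < size x.1 ->
  topT n i (topT n i' x) = topT n i' (topT n i x).
Proof. move=> H1 H2 H3; cfgeq. Qed.

Lemma cTB m n x (i j : nat) : i < size x.1 -> j < size x.2 -> n <= nth 0 x.1 i -> m.+1 <= nth 0 x.2 j ->
  topT n i (topB m j x) = topB m j (topT n i x).
Proof. move=> H1 H2 H3 H4; cfgeq. Qed.

Lemma cBB m x (j j' : nat) : j != j' -> j < size x.2 -> j' < size x.2 ->
  topB m j (topB m j' x) = topB m j' (topB m j x).
Proof. move=> H1 H2 H3; cfgeq. Qed.

Lemma aT_T n x (i i' : nat) : i < size x.1 -> i' < size x.1 -> n <= nth 0 x.1 i ->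
  add_top i' (topT n i x) = topT n i (add_top i' x).
Proof. move=> H1 H2 H3; cfgeq. Qed.

Lemma aT_B m x (i' j : nat) : i' < size x.1 -> j < size x.2 ->
  add_top i' (topB m j x) = topB m j (add_top i' x).
Proof. move=> H1 H2; cfgeq. Qed.

Lemma aB_T n x (i j' : nat) : i < size x.1 -> j' < size x.2 ->
  add_bot j' (topT n i x) = topT n i (add_bot j' x).
Proof. move=> H1 H2; cfgeq. Qed.

Lemma aB_B m x (j j' : nat) : j < size x.2 -> j' < size x.2 -> m.+1 <= nth 0 x.2 j ->
  add_bot j' (topB m j x) = topB m j (add_bot j' x).
Proof. move=> H1 H2 H3; cfgeq. Qed.

Lemma b_T n x (i : nat) : i < size x.1 -> addb (topT n i x) = topT n i (addb x).
Proof. move=> H1; cfgeq. Qed.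

Lemma b_B m x (j : nat) : j < size x.2 -> m.+1 <= nth 0 x.2 j -> addb (topB m j x) = topB m j (addb x).
Proof. move=> H1 H2; cfgeq. Qed.

Lemma b_aT x i : addb (add_top i x) = add_top i (addb x).
Proof. by []. Qed.

Lemma b_aB x (j : nat) : j < size x.2 -> addb (add_bot j x) = add_bot j (addb x).
Proof. move=> H1; cfgeq. Qed.

Lemma rtc_trans (T : Type) (R : T -> T -> Prop) x y z : rtc R x y -> rtc R y z -> rtc R x z.
Proof. by elim=> [//|a b c Hab _ IH] Hz; apply: rtc_step Hab (IH Hz). Qed.

Lemma rtc1 (T : Type) (R : T -> T -> Prop) x y : R x y -> rtc R x y.
Proof. by move=> H; apply: rtc_step H (rtc_refl _ _). Qed.

Lemma TT m n x i : i < m -> n <= nth 0 x.1 i -> topple_step m n x (topT n i x).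
Proof. by move=> H1 H2; left; exists i. Qed.
Lemma TB m n x j : j < n -> m.+1 <= nth 0 x.2 j -> topple_step m n x (topB m j x).
Proof. by move=> H1 H2; right; exists j. Qed.

Lemma T_cases m n x y : topple_step m n x y ->
  (exists i, [/\ i < m, n <= nth 0 x.1 i & y = topT n i x]) \/
  (exists j, [/\ j < n, m.+1 <= nth 0 x.2 j & y = topB m j x]).
Proof. by case=> -[k Hk [H1 H2]]; [left | right]; exists k. Qed.

Lemma shape_topT m n x i : shape m n x -> i < m -> shape m n (topT n i x).
Proof. by case=> H1 H2 Hi; split; rewrite /= ?size_set ?size_map ?H1. Qed.
Lemma shape_topB m n x j : shape m n x -> j < n -> shape m n (topB m j x).
Proof. by case=> H1 H2 Hi; split; rewrite /= ?size_set ?size_map ?H2. Qed.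

Lemma T_shape m n x y : shape m n x -> topple_step m n x y -> shape m n y.
Proof.
move=> Hs /T_cases [[i [H1 H2 ->]]|[j [H1 H2 ->]]]; [exact: shape_topT | exact: shape_topB].
Qed.

Lemma rtc_shape m n x y : shape m n x -> rtc (topple_step m n) x y -> shape m n y.
Proof. by move=> Hs H; elim: H Hs => // a b c Hab _ IH Ha; apply: IH; apply: T_shape Hab. Qed.

Lemma stable_shape m n x : stable m n x -> shape m n x.
Proof. by case. Qed.

Lemma stable_noT m n x y : stable m n x -> ~ topple_step m n x y.
Proof.
case=> S1 S2 S3 S4 /T_cases [[i [H1 H2 _]]|[j [H1 H2 _]]].
- by move: S3 => /(all_nthP 0)/(_ i); rewrite S1 => /(_ H1); lia.
- by move: S4 => /(all_nthP 0)/(_ j); rewrite S2 => /(_ H1); lia.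
Qed.

Lemma rtc_stable m n x y : stable m n x -> rtc (topple_step m n) x y -> y = x.
Proof. by move=> Hs H; elim: H Hs => // a b c Hab _ _ Ha; case: (stable_noT Ha Hab). Qed.

Lemma diamond m n x y z : shape m n x -> topple_step m n x y -> topple_step m n x z ->
  y = z \/ exists u, topple_step m n y u /\ topple_step m n z u.
Proof.
case=> Sx1 Sx2 /T_cases [[i [Hi Hni ->]]|[j [Hj Hnj ->]]] /T_cases [[i' [Hi' Hni' ->]]|[j' [Hj' Hnj' ->]]].
- case: (eqVneq i i') => [<-|Hne]; first by left.
  right; exists (topT n i' (topT n i x)); split.
  + by apply: TT => //; rewrite /topT /= nthset eq_sym (negbTE Hne).
  + rewrite cTT 1?eq_sym ?Sx1 //; apply: TT => //; rewrite /topT /= nthset (negbTE Hne) //.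
- right; exists (topB m j' (topT n i x)); split.
  + by apply: TB => //; rewrite /topT /= nthS Sx2 Hj'; lia.
  + rewrite -cTB ?Sx1 ?Sx2 //; apply: TT => //; rewrite /topB /= nthS Sx1 Hi; lia.
- right; exists (topT n i' (topB m j x)); split.
  + by apply: TT => //; rewrite /topB /= nthS Sx1 Hi'; lia.
  + rewrite cTB ?Sx1 ?Sx2 //; apply: TB => //; rewrite /topT /= nthS Sx2 Hj; lia.
- case: (eqVneq j j') => [<-|Hne]; first by left.
  right; exists (topB m j' (topB m j x)); split.
  + by apply: TB => //; rewrite /topB /= nthset eq_sym (negbTE Hne).
  + rewrite cBB 1?eq_sym ?Sx2 //; apply: TB => //; rewrite /topB /= nthset (negbTE Hne) //.
Qed.

Lemma conf1 m n x y z : shape m n x -> rtc (topple_step m n) x y -> stable m n y ->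
  topple_step m n x z -> rtc (topple_step m n) z y.
Proof.
move=> Hs H; elim: H Hs z => [a _ z Sa /(stable_noT Sa) //|a b c Hab Hbc IH Ha z Sc Haz].
have Hb := T_shape Ha Hab.
case: (diamond Ha Hab Haz) => [<- //|[u [Hbu Hzu]]].
exact: rtc_step Hzu (IH Hb u Sc Hbu).
Qed.

Lemma conf m n x y z : shape m n x -> rtc (topple_step m n) x y -> stable m n y ->
  rtc (topple_step m n) x z -> rtc (topple_step m n) z y.
Proof.
move=> Hs Hxy Sy Hxz; elim: Hxz Hs Hxy => // a b c Hab Hbc IH Ha Hay.
apply: IH; first exact: T_shape Hab.
exact: conf1 Ha Hay Sy Hab.
Qed.

Definition addv (v : bool * nat) (x : config) : config :=
  if v.1 then add_top v.2 x else add_bot v.2 x.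
Definition validv (m n : nat) (v : bool * nat) : bool := if v.1 then v.2 < m else v.2 < n.
Definition add_all (vs : seq (bool * nat)) (x : config) : config :=
  foldl (fun x v => addv v x) x vs.

Lemma shape_addv m n x v : shape m n x -> validv m n v -> shape m n (addv v x).
Proof.
case: v => -[] k [H1 H2] /= Hk; split; rewrite /= ?size_set ?H1 ?H2 //; lia.
Qed.

Lemma shape_add_all m n vs x : shape m n x -> all (validv m n) vs -> shape m n (add_all vs x).
Proof.
elim: vs x => //= v vs IH x Hs /andP[Hv Hvs]; apply: IH => //; exact: shape_addv.
Qed.

Lemma add_all_cat vs1 vs2 x : add_all (vs1 ++ vs2) x = add_all vs2 (add_all vs1 x).
Proof. by rewrite /add_all foldl_cat. Qed.

Lemma mon m n x y v : shape m n x -> validv m n v -> topple_step m n x y ->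
  topple_step m n (addv v x) (addv v y).
Proof.
case=> Sx1 Sx2; case: v => -[] k; rewrite /addv /validv /= => Hk /T_cases [[i [Hi Hni ->]]|[j [Hj Hnj ->]]].
- rewrite aT_T ?Sx1 //; apply: TT => //; rewrite /add_top /= nthset; case: eqP => [<-|_]; lia.
- rewrite aT_B ?Sx1 ?Sx2 //; apply: TB => //.
- rewrite aB_T ?Sx1 ?Sx2 //; apply: TT => //.
- rewrite aB_B ?Sx2 //; apply: TB => //; rewrite /add_bot /= nthset; case: eqP => [<-|_]; lia.
Qed.

Lemma monR m n x y v : shape m n x -> validv m n v -> rtc (topple_step m n) x y ->
  rtc (topple_step m n) (addv v x) (addv v y).
Proof.
move=> Hs Hv H; elim: H Hs => [a _|a b c Hab _ IH Ha]; first exact: rtc_refl.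
apply: rtc_step (mon Ha Hv Hab) (IH (T_shape Ha Hab)).
Qed.

Lemma monA m n vs x y : shape m n x -> all (validv m n) vs -> rtc (topple_step m n) x y ->
  rtc (topple_step m n) (add_all vs x) (add_all vs y).
Proof.
elim: vs x y => //= v vs IH x y Hs /andP[Hv Hvs] H; apply: IH => //.
- exact: shape_addv.
- exact: monR.
Qed.

Lemma monb m n x y : shape m n x -> topple_step m n x y ->
  topple_step m n (addb x) (addb y).
Proof.
case=> Sx1 Sx2 /T_cases [[i [Hi Hni ->]]|[j [Hj Hnj ->]]].
- by rewrite b_T ?Sx1 //; apply: TT.
- rewrite b_B ?Sx2 //; apply: TB => //; rewrite /addb /= nthS Sx2 Hj; lia.
Qed.

Lemma monbR m n x y : shape m n x -> rtc (topple_step m n) x y ->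
  rtc (topple_step m n) (addb x) (addb y).
Proof.
move=> Hs H; elim: H Hs => [a _|a b c Hab _ IH Ha]; first exact: rtc_refl.
apply: rtc_step (monb Ha Hab) (IH (T_shape Ha Hab)).
Qed.

Lemma addb_add_all m n vs x : shape m n x -> all (validv m n) vs ->
  add_all vs (addb x) = addb (add_all vs x).
Proof.
elim: vs x => //= v vs IH x Hs /andP[Hv Hvs].
rewrite -IH //; last exact: shape_addv.
congr add_all; case: v Hv => -[] k /= Hk //.
by rewrite b_aB //; case: Hs => _ ->.
Qed.

Lemma sumn_set (s : seq nat) i a : i < size s -> sumn (set_nth 0 s i a) + nth 0 s i = sumn s + a.
Proof.
elim: s i => [|x s IH] [|i] //= Hi; first lia.
have := IH i Hi; lia.
Qed.

Lemma sumn_mapS (s : seq nat) : sumn (map S s) = sumn s + size s.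
Proof. by elim: s => //= x s ->; lia. Qed.

Lemma stab_ex_aux m n : 0 < n -> forall N K x, sumn x.1 + sumn x.2 < N -> sumn x.1 < K ->
  shape m n x -> exists y, rtc (topple_step m n) x y /\ stable m n y.
Proof.
move=> Hn; elim=> [|N IHN] K x; first by lia.
elim: K x => [|K IHK] x H1 H2 Hs; first by lia.
have [Sx1 Sx2] := Hs.
case Ht: (all (fun v => v < n) x.1); case Hb: (all (fun v => v < m.+1) x.2).
- by exists x; split; [apply: rtc_refl | split].
- move/negbT: Hb; rewrite -has_predC => /(has_nthP 0) [j Hj /= Hnj].
  rewrite Sx2 in Hj.
  have Hy : shape m n (topB m j x) by apply: shape_topB.
  have [y [Hy1 Hy2]] := IHN (sumn (topB m j x).1).+1 (topB m j x) ltac:(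
    rewrite /topB /= sumn_mapS; have := sumn_set (nth 0 x.2 j - m.+1) (i := j) (s := x.2);
    rewrite Sx2 Sx1 => /(_ Hj); lia) (ltnSn _) Hy.
  by exists y; split => //; apply: rtc_step Hy1; apply: TB => //; lia.
- move/negbT: Ht; rewrite -has_predC => /(has_nthP 0) [i Hi /= Hni].
  rewrite Sx1 in Hi.
  have Hy : shape m n (topT n i x) by apply: shape_topT.
  have := sumn_set (nth 0 x.1 i - n) (i := i) (s := x.1); rewrite Sx1 => /(_ Hi) => E1.
  have [y [Hy1 Hy2]] := IHK (topT n i x) ltac:(rewrite /topT /= sumn_mapS Sx2; lia)
     ltac:(rewrite /topT /=; lia) Hy.
  by exists y; split => //; apply: rtc_step Hy1; apply: TT => //; lia.
- move/negbT: Ht; rewrite -has_predC => /(has_nthP 0) [i Hi /= Hni].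
  rewrite Sx1 in Hi.
  have Hy : shape m n (topT n i x) by apply: shape_topT.
  have := sumn_set (nth 0 x.1 i - n) (i := i) (s := x.1); rewrite Sx1 => /(_ Hi) => E1.
  have [y [Hy1 Hy2]] := IHK (topT n i x) ltac:(rewrite /topT /= sumn_mapS Sx2; lia)
     ltac:(rewrite /topT /=; lia) Hy.
  by exists y; split => //; apply: rtc_step Hy1; apply: TT => //; lia.
Qed.

Lemma stab_ex m n x : 0 < n -> shape m n x -> exists y, rtc (topple_step m n) x y /\ stable m n y.
Proof. by move=> Hn; apply: (stab_ex_aux Hn (ltnSn _) (ltnSn _)). Qed.

Lemma chain_addv m n s v s1 : stable m n s -> validv m n v ->
  rtc (topple_step m n) (addv v s) s1 -> stable m n s1 -> chain_step m n s s1.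
Proof.
move=> Ss; case: v => -[] k; rewrite /validv /addv /= => Hk H1 H2; split => //.
- by left; exists k.
- by right; exists k.
Qed.

Lemma lemL m n vs s c : 0 < n -> stable m n s -> all (validv m n) vs ->
  rtc (topple_step m n) (add_all vs s) c -> stable m n c -> rtc (chain_step m n) s c.
Proof.
move=> Hn; elim: vs s => [|v vs IH] s Ss /=.
  by move=> _ H Sc; rewrite (rtc_stable Ss H); apply: rtc_refl.
move=> /andP[Hv Hvs] H Sc.
have Sh := stable_shape Ss.
have [s1 [H1 S1]] := stab_ex Hn (shape_addv Sh Hv).
apply: rtc_step (chain_addv Ss Hv H1 S1) _.
apply: IH => //.
apply: (conf _ H Sc); first exact: shape_add_all (shape_addv Sh Hv) Hvs.
exact: monA (shape_addv Sh Hv) Hvs H1.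
Qed.

Definition cmax (m n : nat) : config := (nseq m n.-1, nseq n m).

Lemma stable_add_top m n x i : stable m n x -> i < m -> nth 0 x.1 i < n.-1 -> stable m n (add_top i x).
Proof.
case=> S1 S2 S3 S4 Hi Hx; split => //=; rewrite ?size_set ?S1 //.
apply/(all_nthP 0) => k; rewrite size_set ?S1 // => Hk; rewrite nthset.
case: eqP => [E|_]; first by subst; lia.
by move/(all_nthP 0): S3; apply; rewrite S1.
Qed.

Lemma stable_add_bot m n x j : stable m n x -> j < n -> nth 0 x.2 j < m -> stable m n (add_bot j x).
Proof.
case=> S1 S2 S3 S4 Hj Hx; split => //=; rewrite ?size_set ?S2 //.
apply/(all_nthP 0) => k; rewrite size_set ?S2 // => Hk; rewrite nthset.
case: eqP => [E|_]; first by subst; lia.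
by move/(all_nthP 0): S4; apply; rewrite S2.
Qed.

Lemma sumn_bound (l : seq nat) k : all (fun v => v < k.+1) l -> sumn l <= size l * k.
Proof. by elim: l => //= a l IHl /andP[Ha /IHl]; rewrite mulSn; lia. Qed.

Lemma lemM_step m n x : 0 < n -> stable m n x -> x <> cmax m n ->
  exists v, [/\ validv m n v, stable m n (addv v x) &
     sumn (addv v x).1 + sumn (addv v x).2 = (sumn x.1 + sumn x.2).+1].
Proof.
move=> Hn Sx Hne; have [S1 S2 S3 S4] := Sx.
case Ht: (all (pred1 n.-1) x.1); case Hb: (all (pred1 m) x.2).
- exfalso; apply: Hne; move/all_pred1P: Ht; move/all_pred1P: Hb.
  rewrite S1 S2 /cmax; case: x {Sx S1 S2 S3 S4} => ? ? /= -> -> //.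
- move/negbT: Hb; rewrite -has_predC => /(has_nthP 0) [j Hj /= Hnj].
  rewrite S2 in Hj.
  have Hlt : nth 0 x.2 j < m.
    by move/(all_nthP 0): S4 => /(_ j); rewrite S2 => /(_ Hj); lia.
  exists (false, j); split => //; first exact: stable_add_bot.
  rewrite /addv /add_bot /=.
  have := sumn_set (nth 0 x.2 j).+1 (i := j) (s := x.2); rewrite S2 => /(_ Hj); lia.
- move/negbT: Ht; rewrite -has_predC => /(has_nthP 0) [i Hi /= Hni].
  rewrite S1 in Hi.
  have Hlt : nth 0 x.1 i < n.-1.
    by move/(all_nthP 0): S3 => /(_ i); rewrite S1 => /(_ Hi); lia.
  exists (true, i); split => //; first exact: stable_add_top.
  rewrite /addv /add_top /=.
  have := sumn_set (nth 0 x.1 i).+1 (i := i) (s := x.1); rewrite S1 => /(_ Hi); lia.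
- move/negbT: Ht; rewrite -has_predC => /(has_nthP 0) [i Hi /= Hni].
  rewrite S1 in Hi.
  have Hlt : nth 0 x.1 i < n.-1.
    by move/(all_nthP 0): S3 => /(_ i); rewrite S1 => /(_ Hi); lia.
  exists (true, i); split => //; first exact: stable_add_top.
  rewrite /addv /add_top /=.
  have := sumn_set (nth 0 x.1 i).+1 (i := i) (s := x.1); rewrite S1 => /(_ Hi); lia.
Qed.

Lemma lemM m n x : 0 < n -> stable m n x -> exists ds, [/\ all (validv m n) ds,
  add_all ds x = cmax m n & rtc (chain_step m n) x (cmax m n)].
Proof.
move=> Hn Sx.
have Bd : forall y, stable m n y -> sumn y.1 + sumn y.2 <= m * n.-1 + n * m.
  move=> y [S1 S2 S3 S4].
  have := @sumn_bound y.1 n.-1; have := @sumn_bound y.2 m.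
  rewrite S1 S2 prednK //; move=> /(_ S4) H1 /(_ S3) H2; lia.
move: {2}(m * n.-1 + n * m - (sumn x.1 + sumn x.2)) (leqnn (m * n.-1 + n * m - (sumn x.1 + sumn x.2))) => N.
elim: N x Sx => [|N IH] x Sx HN.
all: case: (@eqP _ x (cmax m n)) => [->|Hne]; first by exists [::]; split => //; constructor.
all: have [v [Hv Sv Esum]] := lemM_step Hn Sx Hne.
all: have := Bd _ Sv; rewrite Esum => Hb.
- exfalso; lia.
- have [ds [H1 H2 H3]] := IH (addv v x) Sv ltac:(lia).
  exists (v :: ds); split => //=; first by rewrite Hv.
  apply: rtc_step H3; exact: (chain_addv Sx Hv (rtc_refl _ _) Sv).
Qed.

Definition burn (m n : nat) (c : config) (St Sb : pred nat) : config :=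
  (mkseq (fun i => nth 0 c.1 i + count Sb (iota 0 n) - (if St i then n else 0)) m,
   mkseq (fun j => nth 0 c.2 j + 1 + count St (iota 0 m) - (if Sb j then m.+1 else 0)) n).

Lemma count_upd (l : seq nat) (i : nat) (St : pred nat) : uniq l -> i \in l ->
  count (fun k : nat => (k == i) || St k) l = count St l + ~~ St i.
Proof.
elim: l => //= x l IH /andP[Hx Hu]; rewrite inE => /orP[/eqP Ei|Hi].
- subst x; rewrite eqxx /=.
  have -> : count (fun k => (k == i) || St k) l = count St l.
    apply: eq_in_count => k Hk /=; case: eqP => // E; subst; by rewrite Hk in Hx.
  by case: (St i) => /=; lia.
- rewrite IH //; have -> : (x == i) = false by apply/eqP => E; subst; rewrite Hi in Hx.
  by rewrite /=; lia.
Qed.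

Lemma count_all_iota (St : pred nat) N : (forall i, i < N -> St i) -> count St (iota 0 N) = N.
Proof.
move=> H; rewrite -[N in RHS](size_iota 0 N); apply/eqP; rewrite -all_count.
by apply/allP => i; rewrite mem_iota => /andP[_ Hi]; apply: H.
Qed.

Lemma count0_iota (St : pred nat) N : count (predC St) (iota 0 N) = 0 -> forall i, i < N -> St i.
Proof.
move=> H i Hi; apply/negPn/negP => Hn.
have : 0 < count (predC St) (iota 0 N) by rewrite -has_count; apply/hasP; exists i; rewrite ?mem_iota //=.
lia.
Qed.

Lemma burn_eq m n c St Sb St' Sb' : (forall i, i < m -> St i = St' i) ->
  (forall j, j < n -> Sb j = Sb' j) -> burn m n c St Sb = burn m n c St' Sb'.
Proof.
move=> H1 H2.
have E1 : count St (iota 0 m) = count St' (iota 0 m).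
  by apply: eq_in_count => i; rewrite mem_iota => /andP[_ Hi]; apply: H1.
have E2 : count Sb (iota 0 n) = count Sb' (iota 0 n).
  by apply: eq_in_count => i; rewrite mem_iota => /andP[_ Hi]; apply: H2.
rewrite /burn E1 E2; congr pair; rewrite /mkseq; apply/eq_in_map => i; rewrite mem_iota => /andP[_ Hi].
- by rewrite H1.
- by rewrite H2.
Qed.

Lemma burn_all m n c : shape m n c -> burn m n c predT predT = c.
Proof.
case: c => t b [/= S1 S2]; rewrite /burn /= !count_predT !size_iota; f_equal.
- by rewrite -[RHS](mkseq_nth 0) S1; apply: eq_mkseq => i; lia.
- by rewrite -[RHS](mkseq_nth 0) S2; apply: eq_mkseq => i; lia.
Qed.

Lemma burn_start m n c : shape m n c -> burn m n c pred0 pred0 = addb c.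
Proof.
case: c => t b [/= S1 S2]; rewrite /burn /addb /= !count_pred0; f_equal.
- by rewrite -[RHS](mkseq_nth 0) S1; apply: eq_mkseq => i; lia.
- by rewrite -[in RHS](mkseq_nth 0 b) S2 /mkseq -map_comp; apply: eq_map => i /=; lia.
Qed.

Lemma burn_topT m n c St Sb (i : nat) : i < m -> ~~ St i ->
  n <= nth 0 c.1 i + count Sb (iota 0 n) ->
  (forall j, j < n -> Sb j -> m.+1 <= nth 0 c.2 j + 1 + count St (iota 0 m)) ->
  topT n i (burn m n c St Sb) = burn m n c (fun k => (k == i) || St k) Sb.
Proof.
move=> Hi HS Hr Hinv.
have Hc : count (fun k => (k == i) || St k) (iota 0 m) = count St (iota 0 m) + 1.
  by rewrite count_upd ?iota_uniq ?mem_iota // HS.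
rewrite /topT /burn /= Hc; f_equal.
- apply: (@eq_from_nth _ 0); rewrite ?size_set_nth !size_mkseq; first lia.
  move=> k Hk; have Hk' : k < m by lia.
  rewrite nthset !nth_mkseq //; case: eqP => [E|Hne] /=; last by [].
  by subst; rewrite (negbTE HS); lia.
- apply: (@eq_from_nth _ 0) => [|k]; first by rewrite size_map !size_mkseq.
  rewrite size_map size_mkseq => Hk.
  rewrite nthS size_mkseq Hk !nth_mkseq //.
  by case Hb: (Sb k); [have := Hinv k Hk Hb | ]; lia.
Qed.

Lemma burn_topB m n c St Sb (j : nat) : j < n -> ~~ Sb j ->
  m.+1 <= nth 0 c.2 j + 1 + count St (iota 0 m) ->
  (forall i, i < m -> St i -> n <= nth 0 c.1 i + count Sb (iota 0 n)) ->
  topB m j (burn m n c St Sb) = burn m n c St (fun k => (k == j) || Sb k).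
Proof.
move=> Hj HS Hr Hinv.
have Hc : count (fun k => (k == j) || Sb k) (iota 0 n) = count Sb (iota 0 n) + 1.
  by rewrite count_upd ?iota_uniq ?mem_iota // HS.
rewrite /topB /burn /= Hc; f_equal.
- apply: (@eq_from_nth _ 0) => [|k]; first by rewrite size_map !size_mkseq.
  rewrite size_map size_mkseq => Hk.
  rewrite nthS size_mkseq Hk !nth_mkseq //.
  by case Hb: (St k); [have := Hinv k Hk Hb | ]; lia.
- apply: (@eq_from_nth _ 0); rewrite ?size_set_nth !size_mkseq; first lia.
  move=> k Hk; have Hk' : k < n by lia.
  rewrite nthset !nth_mkseq //; case: eqP => [E|Hne] /=; last by [].
  by subst; rewrite (negbTE HS); lia.
Qed.

Lemma count_updC (N i : nat) (St : pred nat) : i < N -> ~~ St i ->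
  count (predC (fun k : nat => (k == i) || St k)) (iota 0 N) + 1 = count (predC St) (iota 0 N).
Proof.
move=> Hi HS.
have := count_predC (fun k : nat => (k == i) || St k) (iota 0 N).
have := count_predC St (iota 0 N).
rewrite count_upd ?iota_uniq ?mem_iota // HS /=; lia.
Qed.

Lemma burning m n c : shape m n c -> fsc_free c -> rtc (topple_step m n) (addb c) c.
Proof.
move=> Sc Hfree; have [S1 S2] := Sc.
rewrite -(burn_start Sc) -{2}(burn_all Sc).
suff H : forall k St Sb, count (predC St) (iota 0 m) + count (predC Sb) (iota 0 n) = k ->
  (forall i, i < m -> St i -> n <= nth 0 c.1 i + count Sb (iota 0 n)) ->
  (forall j, j < n -> Sb j -> m.+1 <= nth 0 c.2 j + 1 + count St (iota 0 m)) ->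
  rtc (topple_step m n) (burn m n c St Sb) (burn m n c predT predT).
  by apply: (H _ pred0 pred0 erefl).
elim=> [|k IH] St Sb Hk Inv1 Inv2.
  rewrite (@burn_eq m n c St Sb predT predT); first exact: rtc_refl.
  - by apply: count0_iota; lia.
  - by apply: count0_iota; lia.
case Hrt: (has (fun i => ~~ St i && (n <= nth 0 c.1 i + count Sb (iota 0 n))) (iota 0 m)).
  move/hasP: Hrt => [i]; rewrite mem_iota => /andP[_ Hi] /= /andP[HS Hr].
  rewrite add0n in Hi.
  apply: (@rtc_step _ _ _ (topT n i (burn m n c St Sb))).
    by apply: TT => //; rewrite /burn /= nth_mkseq //= (negbTE HS); lia.
  rewrite burn_topT //; apply: IH.
  - by have := count_updC Hi HS; lia.
  - move=> i' Hi' /orP[/eqP ->|H] //; exact: Inv1.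
  - by move=> j Hj Hb; have := Inv2 j Hj Hb; rewrite count_upd ?iota_uniq ?mem_iota // HS; lia.
case Hrb: (has (fun j => ~~ Sb j && (m.+1 <= nth 0 c.2 j + 1 + count St (iota 0 m))) (iota 0 n)).
  move/hasP: Hrb => [j]; rewrite mem_iota => /andP[_ Hj] /= /andP[HS Hr].
  rewrite add0n in Hj.
  apply: (@rtc_step _ _ _ (topB m j (burn m n c St Sb))).
    by apply: TB => //; rewrite /burn /= nth_mkseq //= (negbTE HS); lia.
  rewrite burn_topB //; apply: IH.
  - by have := count_updC Hj HS; lia.
  - by move=> i Hi Hb; have := Inv1 i Hi Hb; rewrite count_upd ?iota_uniq ?mem_iota // HS; lia.
  - move=> j' Hj' /orP[/eqP ->|H] //; exact: Inv2.
exfalso; apply: (Hfree (predC St) (predC Sb)); split; rewrite ?S1 ?S2.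
- case: (posnP (count (predC St) (iota 0 m))) => H0.
  + by apply/orP; right; rewrite has_count; lia.
  + by apply/orP; left; rewrite has_count; lia.
- move=> i Hi /= HS; move/hasPn: Hrt => /(_ i); rewrite mem_iota Hi /= HS /= => /(_ isT).
  have := count_predC Sb (iota 0 n); rewrite size_iota; lia.
- move=> j Hj /= HS; move/hasPn: Hrb => /(_ j); rewrite mem_iota Hj /= HS /= => /(_ isT).
  have := count_predC St (iota 0 m); rewrite size_iota; lia.
Qed.

Definition Kp (m n : nat) (c x : config) :=
  exists us, all (validv m n) us /\ rtc (topple_step m n) (add_all us x) c.

Lemma Kp_T m n c x y : shape m n x -> topple_step m n x y -> Kp m n c y -> Kp m n c x.
Proof.
move=> Hs Hxy [us [Hv H]]; exists us; split => //.
exact: rtc_trans (monA Hs Hv (rtc1 Hxy)) H.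
Qed.

Lemma Kp_add_all m n c ds x : all (validv m n) ds -> Kp m n c (add_all ds x) -> Kp m n c x.
Proof.
move=> Hds [us [Hv H]]; exists (ds ++ us); split; first by rewrite all_cat Hds.
by rewrite add_all_cat.
Qed.

Lemma Kp_b m n c x : rtc (topple_step m n) (addb c) c -> shape m n x -> Kp m n c x ->
  Kp m n c (addb x).
Proof.
move=> Hb Hs [us [Hv H]]; exists us; split => //.
rewrite (addb_add_all Hs Hv); apply: rtc_trans Hb.
exact: monbR (shape_add_all Hs Hv) H.
Qed.

Lemma add_all_nseq_top (k i : nat) x : i < size x.1 ->
  add_all (nseq k (true, i)) x = (set_nth 0 x.1 i (nth 0 x.1 i + k), x.2).
Proof.
elim: k x => [|k IH] x Hi /=.
  by case: x Hi => a b /= Hi; f_equal; seqeq.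
rewrite IH /addv /add_top /=; last by rewrite size_set.
by f_equal; seqeq.
Qed.

Lemma add_all_nseq_bot (k j : nat) x : j < size x.2 ->
  add_all (nseq k (false, j)) x = (x.1, set_nth 0 x.2 j (nth 0 x.2 j + k)).
Proof.
elim: k x => [|k IH] x Hj /=.
  by case: x Hj => a b /= Hj; f_equal; seqeq.
rewrite IH /addv /add_bot /=; last by rewrite size_set.
by f_equal; seqeq.
Qed.

Lemma Kp_top m n c x (i : nat) : 0 < n -> rtc (topple_step m n) (addb c) c -> shape m n x -> i < m ->
  Kp m n c x -> Kp m n c (add_top i x).
Proof.
move=> Hn Hb Hs Hi HK; have [S1 S2] := Hs.
apply: (@Kp_add_all _ _ _ (nseq n.-1 (true, i))).
  by apply/allP => v /nseqP [-> _]; rewrite /validv.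
have Hs' : shape m n (add_top i x) by apply: (shape_addv (v := (true, i))).
set z := add_all _ _.
have Ez : z = (set_nth 0 x.1 i (nth 0 x.1 i + n), x.2).
  rewrite /z add_all_nseq_top /add_top /=; last by rewrite size_set ?S1.
  by f_equal; seqeq.
have Hsz : shape m n z by rewrite Ez; split; rewrite /= ?size_set ?S1 ?S2.
apply: (Kp_T Hsz (y := addb x)); last exact: Kp_b.
have -> : addb x = topT n i z by rewrite Ez /topT /addb /=; f_equal; seqeq.
by apply: TT => //; rewrite Ez /= nthset eqxx; lia.
Qed.

Lemma Kp_tops m n c x l : 0 < n -> rtc (topple_step m n) (addb c) c -> shape m n x ->
  all (fun i => i < m) l -> Kp m n c x -> Kp m n c (add_all [seq (true, i) | i <- l] x).
Proof.
move=> Hn Hb; elim: l x => //= i l IH x Hs /andP[Hi Hl] HK.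
apply: IH => //; first exact: (shape_addv (v := (true, i))).
exact: Kp_top.
Qed.

Lemma add_tops_gen l x : uniq l -> all (fun i => i < size x.1) l ->
  [/\ (add_all [seq (true, i) | i <- l] x).2 = x.2,
      size (add_all [seq (true, i) | i <- l] x).1 = size x.1 &
      forall k, nth 0 (add_all [seq (true, i) | i <- l] x).1 k = nth 0 x.1 k + (k \in l)].
Proof.
elim: l x => [|i l IH] x /=.
  by move=> _ _; split => // k; rewrite addn0.
move=> /andP[Hil Hu] /andP[Hi Hl].
have Hl' : all (fun k => k < size (add_top i x).1) l by rewrite /add_top /= size_set.
have [E1 E2 E3] := IH (add_top i x) Hu Hl'.
rewrite /addv /=; split.
- by rewrite E1.
- by rewrite E2 /add_top /= size_set.
- move=> k; rewrite E3 /add_top /= nthset inE.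
  case: eqP => [E|_] /=; last by [].
  subst k; rewrite (negbTE Hil); lia.
Qed.

Lemma add_tops m x : size x.1 = m -> add_all [seq (true, i) | i <- iota 0 m] x = (map S x.1, x.2).
Proof.
move=> S1.
have [E1 E2 E3] := @add_tops_gen (iota 0 m) x (iota_uniq _ _)
   ltac:(by apply/allP => i; rewrite mem_iota S1).
case: (add_all _ x) E1 E2 E3 => a b /= -> E2 E3; f_equal.
apply: (@eq_from_nth _ 0); rewrite ?size_map // => k Hk.
by rewrite E3 nthS mem_iota S1; case: ltnP => H /=; lia.
Qed.

Lemma Kp_bot m n c x (j : nat) : 0 < n -> rtc (topple_step m n) (addb c) c -> shape m n x -> j < n ->
  Kp m n c x -> Kp m n c (add_bot j x).
Proof.
move=> Hn Hb Hs Hj HK; have [S1 S2] := Hs.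
apply: (@Kp_add_all _ _ _ (nseq m (false, j))).
  by apply/allP => v /nseqP [-> _]; rewrite /validv.
set z := add_all _ _.
have Ez : z = (x.1, set_nth 0 x.2 j (nth 0 x.2 j + m.+1)).
  rewrite /z add_all_nseq_bot /add_bot /=; last by rewrite size_set ?S2.
  by f_equal; seqeq.
have Hsz : shape m n z by rewrite Ez; split; rewrite /= ?size_set ?S1 ?S2.
apply: (Kp_T Hsz (y := (map S x.1, x.2))).
  have -> : (map S x.1, x.2) = topB m j z by rewrite Ez /topB /=; f_equal; seqeq.
  by apply: TB => //; rewrite Ez /= nthset eqxx; lia.
rewrite -(add_tops S1); apply: Kp_tops => //.
by apply/allP => i; rewrite mem_iota.
Qed.

Lemma Kp_all m n c ds x : 0 < n -> rtc (topple_step m n) (addb c) c -> shape m n x ->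
  all (validv m n) ds -> Kp m n c x -> Kp m n c (add_all ds x).
Proof.
move=> Hn Hb; elim: ds x => //= v ds IH x Hs /andP[Hv Hds] HK.
apply: IH => //; first exact: shape_addv.
case: v Hv => -[] k; rewrite /validv /addv /= => Hk.
- exact: Kp_top.
- exact: Kp_bot.
Qed.

Lemma Rec m n c : 0 < n -> stable m n c -> fsc_free c ->
  forall c', stable m n c' -> rtc (chain_step m n) c' c.
Proof.
move=> Hn Sc Hfree c' Sc'.
have Shc := stable_shape Sc.
have Hb := burning Shc Hfree.
have Kc : Kp m n c c by exists [::]; split => //; apply: rtc_refl.
have [ds [Hds Eds _]] := lemM Hn Sc.
have [us [Hus Hr]] : Kp m n c (cmax m n) by rewrite -Eds; apply: Kp_all.
have [ds' [Hds' Eds' _]] := lemM Hn Sc'.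
apply: (@lemL m n (ds' ++ us)) => //; first by rewrite all_cat Hds' Hus.
by rewrite add_all_cat Eds'.
Qed.

Lemma count_del (l : seq nat) (i : nat) (At : pred nat) : uniq l -> i \in l ->
  count (fun k : nat => (k != i) && At k) l + At i = count At l.
Proof.
elim: l => //= x l IH /andP[Hx Hu]; rewrite inE => /orP[/eqP Ei|Hi].
- subst x; rewrite eqxx /=.
  have -> : count (fun k : nat => (k != i) && At k) l = count At l.
    apply: eq_in_count => k Hk /=; case: eqP => // E; subst; by rewrite Hk in Hx.
  lia.
- rewrite -IH //; have -> : (x != i) = true by apply/eqP => E; subst; rewrite Hi in Hx.
  by rewrite /=; lia.
Qed.

Lemma fsc_add m n x v At Ab : shape m n x -> validv m n v -> fsc (addv v x) At Ab -> fsc x At Ab.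
Proof.
case=> S1 S2; case: v => -[] k; rewrite /validv /addv /add_top /add_bot /= => Hk [H1 H2 H3]; simpl in H1, H2, H3.
- rewrite size_set ?S1 // in H1 H2 H3; split => //; rewrite ?S1 //.
  move=> i Hi HA; have := H2 i Hi HA; rewrite nthset; case: eqP => [->|_]; lia.
- rewrite size_set ?S2 // in H1 H2 H3; split => //; rewrite ?S2 //.
  move=> j Hj HA; have := H3 j Hj HA; rewrite nthset; case: eqP => [->|_]; lia.
Qed.

Lemma has_of_count (A : pred nat) N : 0 < count A (iota 0 N) -> has A (iota 0 N).
Proof. by rewrite has_count. Qed.

Lemma fsc_topT m n x (i : nat) At Ab : shape m n x -> i < m -> n <= nth 0 x.1 i ->
  fsc (topT n i x) At Ab -> exists At' Ab', fsc x At' Ab'.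
Proof.
case=> S1 S2 Hi Hni; rewrite /fsc /topT /= size_set ?S1 // size_map S2 => -[H1 H2 H3].
case HA: (At i).
- exists (fun k : nat => (k != i) && At k), Ab; split; rewrite ?S1 ?S2.
  + apply/orP; right; apply: has_of_count; have := H2 i Hi HA; lia.
  + move=> k Hk /andP[Hki HAk]; have := H2 k Hk HAk; rewrite nthset (negbTE Hki); lia.
  + move=> j Hj HB; have := H3 j Hj HB; rewrite nthS S2 Hj.
    have := @count_del (iota 0 m) i At (iota_uniq _ _); rewrite mem_iota Hi HA => /(_ isT).
    lia.
- exists At, Ab; split; rewrite ?S1 ?S2 //.
  + move=> k Hk HAk; have := H2 k Hk HAk; rewrite nthset; case: eqP => [E|_]; last lia.
    by subst; rewrite HA in HAk.
  + move=> j Hj HB; have := H3 j Hj HB; rewrite nthS S2 Hj; lia.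
Qed.

Lemma fsc_topB m n x (j : nat) At Ab : shape m n x -> j < n -> m.+1 <= nth 0 x.2 j ->
  fsc (topB m j x) At Ab -> exists At' Ab', fsc x At' Ab'.
Proof.
case=> S1 S2 Hj Hnj; rewrite /fsc /topB /= size_set ?S2 // size_map S1 => -[H1 H2 H3].
case HB: (Ab j).
- exists At, (fun k : nat => (k != j) && Ab k); split; rewrite ?S1 ?S2.
  + apply/orP; left; apply: has_of_count; have := H3 j Hj HB; lia.
  + move=> i Hi HA; have := H2 i Hi HA; rewrite nthS S1 Hi.
    have := @count_del (iota 0 n) j Ab (iota_uniq _ _); rewrite mem_iota Hj HB => /(_ isT).
    lia.
  + move=> k Hk /andP[Hkj HBk]; have := H3 k Hk HBk; rewrite nthset (negbTE Hkj); lia.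
- exists At, Ab; split; rewrite ?S1 ?S2 //.
  + move=> i Hi HA; have := H2 i Hi HA; rewrite nthS S1 Hi; lia.
  + move=> k Hk HBk; have := H3 k Hk HBk; rewrite nthset; case: eqP => [E|_]; last lia.
    by subst; rewrite HB in HBk.
Qed.

Definition has_fsc (c : config) := exists At Ab, fsc c At Ab.

Lemma fsc_T m n x y : shape m n x -> topple_step m n x y -> has_fsc y -> has_fsc x.
Proof.
move=> Hs /T_cases [[i [Hi Hni ->]]|[j [Hj Hnj ->]]] [At [Ab H]].
- exact: fsc_topT Hs Hi Hni H.
- exact: fsc_topB Hs Hj Hnj H.
Qed.

Lemma fsc_rtcT m n x y : shape m n x -> rtc (topple_step m n) x y -> has_fsc y -> has_fsc x.
Proof.
move=> Hs H; elim: H Hs => // a b c Hab _ IH Ha Hc.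
exact: fsc_T Ha Hab (IH (T_shape Ha Hab) Hc).
Qed.

Lemma fsc_chain m n x y : chain_step m n x y -> has_fsc y -> has_fsc x.
Proof.
move=> [Sx H] Hy; have Hs := stable_shape Sx.
case: H => -[k Hk [H1 _]].
- have [At [Ab Hf]] := fsc_rtcT (shape_addv (v := (true, k)) Hs Hk) H1 Hy.
  by rewrite /has_fsc; exists At, Ab; exact: (fsc_add (v := (true, k)) Hs Hk Hf).
- have [At [Ab Hf]] := fsc_rtcT (shape_addv (v := (false, k)) Hs Hk) H1 Hy.
  by rewrite /has_fsc; exists At, Ab; exact: (fsc_add (v := (false, k)) Hs Hk Hf).
Qed.

Lemma fsc_chainR m n x y : rtc (chain_step m n) x y -> has_fsc y -> has_fsc x.
Proof. by elim=> // a b c Hab _ IH Hc; apply: fsc_chain Hab (IH Hc). Qed.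

Lemma cmax_free m n : fsc_free (cmax m n).
Proof.
move=> At Ab [/=]; rewrite !size_nseq => H1 H2 H3.
have HnB : ~~ has Ab (iota 0 n).
  apply/hasP => -[j]; rewrite mem_iota => /andP[_ Hj] HB.
  have := H3 j Hj HB; rewrite nth_nseq Hj.
  have := count_size At (iota 0 m); rewrite size_iota; lia.
move: H1; rewrite (negbTE HnB) orbF => /hasP [i]; rewrite mem_iota => /andP[_ Hi] HA.
have := H2 i Hi HA; move: HnB; rewrite has_count; lia.
Qed.

Lemma rec_free m n c : 0 < n -> recurrent m n c -> fsc_free c.
Proof.
move=> Hn [Sc Hrec] At Ab Hf.
have [ds [_ _ Hcm]] := lemM Hn Sc.
have [At' [Ab' Hf']] := fsc_chainR (Hrec _ Hcm) (ex_intro _ At (ex_intro _ Ab Hf)).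
exact: cmax_free Hf'.
Qed.

Lemma chain_stable m n x y : rtc (chain_step m n) x y -> stable m n x -> stable m n y.
Proof.
elim=> // a b c [_ H] _ IH _; apply: IH.
by case: H => -[k _ [_ Hs]].
Qed.

Lemma path0_sorted (l : seq nat) : path leq 0 l -> sorted leq l.
Proof. by case: l => //= h l /andP[]. Qed.

Lemma cfg_props m n w : 1 <= n -> motz m (n - 1) w ->
  sorted_config (cfg_of m w) /\ stable m n (cfg_of m w).
Proof.
move=> Hn Hw; have [C1 C2 C3 C4] := motz_counts Hn Hw.
rewrite /cfg_of ct_hts cb_hts.
have A1 := hts_le isN (map upper w) 0; rewrite cnt_upperN C1 in A1.
have A2 := hts_le isE (map lower w) 0; rewrite cnt_lowerE C4 in A2.
split; split => /=.
- exact: path0_sorted (hts_path _ _ _).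
- apply: path0_sorted; rewrite rcons_path hts_path /=.
  have := mem_last 0 (hts isE 0 (map lower w)); rewrite inE => /orP[/eqP ->//|Hin].
  by move/allP: A2 => /(_ _ Hin).
- by rewrite size_hts cnt_predCN cnt_upperE.
- by rewrite size_rcons size_hts cnt_predCE cnt_lowerN C3; lia.
- by apply: (sub_all _ A1) => h /=; lia.
- by rewrite all_rcons ltnSn /=; apply: (sub_all _ A2) => h /=; lia.
Qed.

Theorem theorem4p14 (m n : nat) : 1 <= n ->
  (forall w, motz m (n - 1) w ->
     [/\ sorted_config (cfg_of m w), recurrent m n (cfg_of m w),
         parallelogram m n (Phi m n (cfg_of m w))
       & Xi (Phi m n (cfg_of m w)) = w])
  /\ (forall w1 w2, motz m (n - 1) w1 -> motz m (n - 1) w2 ->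
        cfg_of m w1 = cfg_of m w2 -> w1 = w2)
  /\ (forall c, sorted_config c -> recurrent m n c ->
        exists w, motz m (n - 1) w /\ cfg_of m w = c).
Proof.
move=> Hn; split; [|split].
- move=> w Hw; have [So St] := cfg_props Hn Hw.
  split => //.
  + rewrite /recurrent; split; first exact: St.
    move=> c' Hc'.
    apply: Rec => //; first exact: (fsc_free_cfg Hn Hw).
    exact: chain_stable Hc' St.
  + exact: para_w.
  + exact: Xi_w.
- move=> w1 w2 H1 H2 E.
  by rewrite -(Xi_w Hn H1) -(Xi_w Hn H2) E.
- move=> c Hso Hrec.
  apply: construct => //; first by case: Hrec.
  exact: rec_free Hrec.
Qed.
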